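(* Let $F=\{T_1,\dots,T_n\}$ be a finite family of reduction operators relative to a well-ordered set $(G,<)$ and let $2\le i\le n$. Identifying $\mathrm{syz}(T_1,\dots,T_{i-1})$ with its image under $\iota_i:(v_1,\dots,v_{i-1})\mapsto(v_1,\dots,v_{i-1},0)$, we have the direct sum decomposition \[\mathrm{syz}(T_1,\dots,T_i)=\mathrm{im}(\iota_i)\oplus\mathbb{K}\{s_{i,g_0}\mid g_0\in\mathrm{red}(U_{i-1}\vee T_i)\},\] where $s_{i,g_0}$ is viewed in $\ker T_1\times\dots\times\ker T_i$.
   Context: Let $\mathbb{K}$ be a field, $(G,<)$ a well-ordered set and $\mathbb{K}G$ the vector space with basis $G$. For $v\neq 0$, $\mathrm{lt}(v)$ is the greatest element of $G$ appearing with nonzero coefficient in $v$. Extend $<$ to $\mathbb{K}G$: $u<v$ if $u=0$ and $v\neq0$, or if $\mathrm{lt}(u)<\mathrm{lt}(v)$; $u\le v$ means $u<v$ or $u=v$. A reduction operator is an idempotent linear endomorphism $T$ of $\mathbb{K}G$ with $T(g)\le g$ for all $g\in G$; $\mathrm{red}(T)=\{g\in G\mid T(g)\neq g\}$. The elements $g-T(g)$, $g\in\mathrm{red}(T)$, form a basis of $\ker T$; the expression of $v\in\ker T$ in this basis is its $T$-decomposition. For every subspace $V$ there is a unique reduction operator $\ker^{-1}(V)$ with kernel $V$; $T\wedge T'=\ker^{-1}(\ker T+\ker T')$, $T\vee T'=\ker^{-1}(\ker T\cap\ker T')$, and $T_1\wedge\dots\wedge T_k=\ker^{-1}(\sum\ker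 T_j)$. For a finite family $F'=\{T_1,\dots,T_k\}$: $\mathbf{ker}(F')=\ker T_1\times\dots\times\ker T_k$; $\pi_{F'}(v_1,\dots,v_k)=v_1+\dots+v_k$; $\mathrm{syz}(F')=\mathrm{syz}(T_1,\dots,T_k)=\ker\pi_{F'}$. For $g\in\mathrm{red}(T_j)$, $e_{j,g}$ is the tuple with $g-T_j(g)$ at position $j$ and $0$ elsewhere; these form a basis of $\mathbf{ker}(F')$, well-ordered by $e_{j,g}\sqsubset e_{j',g'}$ iff $j<j'$, or $j=j'$ and $g<g'$. The leading term of a nonzero element is the $\sqsubset$-greatest $e_{j,g}$ in its expansion; $\mathrm{lt}(\mathrm{syz}(F'))$ is the set of leading terms of nonzero syzygies. Every $v\in\ker(T_1\wedge\dots\wedge T_k)$ has a unique expression $v=\sum\lambda_{j,g}(g-T_j(g))$ over pairs with $g\in\mathrm{red}(T_j)$ and $e_{j,g}\notin\mathrm{lt}(\mathrm{syz}(F'))$: its canonical decomposition with respect to $F'$. $U_{i-1}=T_1\wedge\dots\wedge T_{i-1}$. For $g_0\in\mathrm{red}(U_{i-1}\vee T_i)$, $v_{i,g_0}=g_0-(U_{i-1}\vee T_i)(g_0)\in\ker U_{i-1}\cap\ker T_i$. With $\sum_{j,g'}\lambda_{j,g'}(g'-T_j(g'))$ its canonical decomposition with respect to $\{T_1,\dots,T_{i-1}\}$ and $\sum_g\lambda_g(g-T_i(g))$ its $T_i$-decomposition, $s_{i,g_0}=\sum_g\lambda_g e_{i,g}-\sum_{j,g'}\lambda_{j,g'}e_{j,g'}$.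 *)

(* Defs.v *)
From HB Require Import structures.
From mathcomp Require Import all_boot all_order all_algebra.
From mathcomp Require Import finmap.
From mathcomp.multinomials Require Import monalg.
From Stdlib Require Import ClassicalEpsilon.



Unset Printing Implicit Defensive.

Import Order.TTheory GRing.Theory Num.Theory.
Local Open Scope ring_scope.

Section ReductionOperators.

Variable (K : fieldType) (d : Order.disp_t) (G : orderType d).

(* The vector space K G with basis G: finitely supported functions G -> K.
   The basis vector g is << g >>, the coefficient of v at g is v@_g,
   and msupp v is the (finite) set of g with v@_g != 0. *)
Local Notation KG := {malg K[G]}.

Definition is_lt (v : KG) (g : G) : Prop :=
  g \in msupp v /\ forall h, h \in msupp v -> (h <= g)%O.

Definition vlt (u v : KG) : Prop :=
  (u = 0 /\ v <> 0) \/
  (exists gu gv, [/\ is_lt u gu, is_lt v gv & (gu < gv)%O]).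

Definition vle (u v : KG) : Prop := vlt u v \/ u = v.

Definition reduction_op (T : KG -> KG) : Prop :=
  [/\ linear T, (forall v, T (T v) = T v) & (forall g : G, vle (T << g >>) << g >>)].

Definition red (T : KG -> KG) (g : G) : Prop := T << g >> <> << g >>.

Definition kerP (T : KG -> KG) (v : KG) : Prop := T v = 0.

Definition kerinv (V : KG -> Prop) : KG -> KG :=
  epsilon (inhabits (fun v : KG => v))
    (fun T => reduction_op T /\ forall v, kerP T v <-> V v).

Definition meet_op (T T' : KG -> KG) := kerinv (fun v => kerP T v \/ kerP T' v).
Definition join_op (T T' : KG -> KG) := kerinv (fun v => kerP T v /\ kerP T' v).

(* Families: T : nat -> (KG -> KG); the operator T_{j+1} of the paper is T j.
   The first k operators T_1, ..., T_k are T 0, ..., T (k-1). *)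

Definition sum_ker (T : nat -> KG -> KG) (k : nat) (v : KG) : Prop :=
  exists w : 'I_k -> KG, (forall j : 'I_k, kerP (T j) (w j)) /\ v = \sum_j w j.

Definition Umeet (T : nat -> KG -> KG) (k : nat) : KG -> KG :=
  kerinv (sum_ker T k).

Definition kerprod (T : nat -> KG -> KG) (k : nat) (x : {ffun 'I_k -> KG}) : Prop :=
  forall j : 'I_k, kerP (T j) (x j).

Definition syz (T : nat -> KG -> KG) (k : nat) (x : {ffun 'I_k -> KG}) : Prop :=
  kerprod T k x /\ \sum_j x j = 0.

(* the sum  sum_{g} lam_g (g - T(g)),  the coefficients lam being stored in an
   element of K G (finitely supported coefficient family indexed by G) *)
Definition dsum (T : KG -> KG) (lam : KG) : KG :=
  \sum_(g <- msupp lam) lam@_g *: (<< g >> - T << g >>).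

Definition tdec (T : KG -> KG) (v : KG) (lam : KG) : Prop :=
  (forall g, g \in msupp lam -> red T g) /\ v = dsum T lam.

(* expansion of x in ker T_1 x ... x ker T_k in the basis e_{j,g}:
   the coefficient of e_{j,g} is (lam j)@_g *)
Definition expansion (T : nat -> KG -> KG) (k : nat)
  (x : {ffun 'I_k -> KG}) (lam : 'I_k -> KG) : Prop :=
  forall j : 'I_k, tdec (T j) (x j) (lam j).

(* e_{j,g} is in lt(syz(T_1,...,T_k)) : it is the leading term (for the
   order e_{j,g} < e_{j',g'} iff j < j' or (j = j' and g < g')) of a
   nonzero syzygy *)
Definition lt_syz (T : nat -> KG -> KG) (k : nat) (j : 'I_k) (g : G) : Prop :=
  exists (x : {ffun 'I_k -> KG}) (lam : 'I_k -> KG),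
    [/\ syz T k x, x != 0, expansion T k x lam, g \in msupp (lam j) &
        forall (j' : 'I_k) g', g' \in msupp (lam j') ->
          (j' < j)%N \/ (j' = j /\ (g' <= g)%O)].

Definition candec (T : nat -> KG -> KG) (k : nat) (v : KG) (lam : 'I_k -> KG) : Prop :=
  [/\ forall (j : 'I_k) g, g \in msupp (lam j) -> red (T j) g,
      forall (j : 'I_k) g, g \in msupp (lam j) -> ~ lt_syz T k j g &
      v = \sum_(j : 'I_k) dsum (T j) (lam j)].

(* iota_i : ker T_1 x ... x ker T_{i-1} -> ker T_1 x ... x ker T_i,
   (v_1, ..., v_{i-1}) |-> (v_1, ..., v_{i-1}, 0); here i = m.+1 *)
Definition iota_syz (m : nat) (y : {ffun 'I_m -> KG}) : {ffun 'I_m.+1 -> KG} :=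
  [ffun j : 'I_m.+1 => (if (insub (val j) : option 'I_m) is Some j' then y j' else 0) : KG].

Definition s_rel (T : nat -> KG -> KG) (m : nat) (g0 : G) (s : {ffun 'I_m.+1 -> KG}) : Prop :=
  let v := << g0 >> - join_op (Umeet T m) (T m) << g0 >> in
  exists (lam : KG) (mu : 'I_m -> KG),
    [/\ tdec (T m) v lam, candec T m v mu &
        s = [ffun j : 'I_m.+1 =>
               (if (insub (val j) : option 'I_m) is Some j' then - dsum (T j') (mu j')
               else dsum (T m) lam) : KG]].

Definition s_elt (T : nat -> KG -> KG) (m : nat) (g0 : G) : {ffun 'I_m.+1 -> KG} :=
  epsilon (inhabits 0) (s_rel T m g0).

Definition in_span_s (T : nat -> KG -> KG) (m : nat) (x : {ffun 'I_m.+1 -> KG}) : Prop :=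
  exists (r : seq G) (c : G -> K),
    (forall g0, g0 \in r -> red (join_op (Umeet T m) (T m)) g0) /\
    x = \sum_(g0 <- r) c g0 *: s_elt T m g0.

End ReductionOperators.
Arguments is_lt {K d G}.
Arguments vlt {K d G}.
Arguments vle {K d G}.
Arguments reduction_op {K d G}.
Arguments red {K d G}.
Arguments kerP {K d G}.
Arguments kerinv {K d G}.
Arguments meet_op {K d G}.
Arguments join_op {K d G}.
Arguments sum_ker {K d G}.
Arguments Umeet {K d G}.
Arguments kerprod {K d G}.
Arguments syz {K d G}.
Arguments dsum {K d G}.
Arguments tdec {K d G}.
Arguments expansion {K d G}.
Arguments lt_syz {K d G}.
Arguments candec {K d G}.
Arguments iota_syz {K d G}.
Arguments s_rel {K d G}.
Arguments s_elt {K d G}.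
Arguments in_span_s {K d G}.

(* Main.v *)
Require Import Defs.
From HB Require Import structures.
From mathcomp Require Import all_boot all_order all_algebra.
From mathcomp Require Import finmap.
From mathcomp.multinomials Require Import monalg.
From Stdlib Require Import ClassicalEpsilon.

Import Order.TTheory GRing.Theory Num.Theory.
Local Open Scope ring_scope.
Set Implicit Arguments. Unset Strict Implicit.



Section Basics.
Variable (K : fieldType) (d : Order.disp_t) (G : orderType d).
Local Notation KG := {malg K[G]}.

Lemma seq_max (s : seq G) : s != [::] -> exists2 h, h \in s & forall h', h' \in s -> (h' <= h)%O.
Proof.
elim: s => [//|a s IH] _.
case: (altP (s =P [::])) => [->|/IH [h hs hmax]].
  exists a; first by rewrite mem_seq1.
  by move=> h'; rewrite mem_seq1 => /eqP ->.
case: (leP a h) => ah.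
  exists h; first by rewrite inE hs orbT.
  by move=> h'; rewrite inE => /orP [/eqP ->|/hmax].
exists a; first by rewrite inE eqxx.
move=> h'; rewrite inE => /orP [/eqP ->//|/hmax hh].
exact: le_trans hh (ltW ah).
Qed.

Lemma msupp_max (v : KG) : v != 0 -> exists h, is_lt v h.
Proof.
move=> nz.
have : (msupp v : seq G) != [::].
  apply: contra nz => /eqP e; apply/eqP/malgP => x.
  by rewrite mcoeff0 mcoeff_outdom // -[x \in msupp v]/(x \in (msupp v : seq G)) e.
by case/seq_max => h hin hmax; exists h; split.
Qed.
End Basics.




Section Kerinv.
Variable (K : fieldType) (d : Order.disp_t) (G : orderType d).
Hypothesis wfG : well_founded (fun x y : G => (x < y)%O).
Local Notation KG := {malg K[G]}.

Lemma is_lt_coef (v : KG) h : is_lt v h -> v@_h != 0.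
Proof. by case=> hin _; rewrite mcoeff_neq0. Qed.

Lemma is_lt_out (v : KG) h h' : is_lt v h -> ~~ (h' <= h)%O -> v@_h' = 0.
Proof.
case=> _ hm nle; apply: mcoeff_outdom; apply: contra nle; exact: hm.
Qed.

Lemma is_ltU (g : G) : is_lt (<< g >> : KG) g.
Proof.
rewrite /is_lt msuppU oner_eq0; split; first by rewrite inE.
by move=> h; rewrite inE => /eqP ->.
Qed.

Lemma mcoeffU1' (g h : G) : (<< g >> : KG)@_h = (g == h)%:R.
Proof. by rewrite mcoeffU. Qed.

Lemma U_neq0 (g : G) : (<< g >> : KG) != 0.
Proof. by rewrite monalgU_eq0 oner_eq0. Qed.

Variable V : KG -> Prop.
Hypothesis V0 : V 0.
Hypothesis VL : forall a u w, V u -> V w -> V (a *: u + w).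

Lemma VD u w : V u -> V w -> V (u + w).
Proof. by move=> hu hw; rewrite -[u]scale1r; apply: VL. Qed.
Lemma VZ a u : V u -> V (a *: u).
Proof. by move=> hu; rewrite -[_ *: _]addr0; apply: VL. Qed.
Lemma VB u w : V u -> V w -> V (u - w).
Proof. by move=> hu hw; apply: VD => //; rewrite -scaleN1r; apply: VZ. Qed.

Definition Lt h := exists v, V v /\ is_lt v h.
Definition noL (w : KG) := forall h, Lt h -> w@_h = 0.

Lemma nf_le b : forall u : KG, (forall h, ~~ (h <= b)%O -> u@_h = 0) ->
  exists w, [/\ V (u - w), noL w & forall h, ~~ (h <= b)%O -> w@_h = 0].
Proof.
elim/(well_founded_induction wfG): b => b IH.
have nf_lt : forall u : KG, (forall h, ~~ (h < b)%O -> u@_h = 0) ->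
  exists w, [/\ V (u - w), noL w & forall h, ~~ (h < b)%O -> w@_h = 0].
  move=> u hu; case: (eqVneq u 0) => [->|unz].
    by exists 0; split => //; rewrite ?subr0 // => h _; rewrite mcoeff0.
  have [h0 lth0] := msupp_max unz.
  have h0b : (h0 < b)%O.
    by apply: contraNT (is_lt_coef lth0) => /hu ->.
  have [w [w1 w2 w3]] := IH h0 h0b u (fun h => is_lt_out lth0).
  exists w; split => // h hb; apply: w3; apply: contra hb => hh0.
  exact: le_lt_trans hh0 h0b.
move=> u hu; set c := u@_b.
have sub_lt : forall u' : KG, (forall h, ~~ (h <= b)%O -> u'@_h = 0) -> u'@_b = 0 ->
    forall h, ~~ (h < b)%O -> u'@_h = 0.
  move=> u' h1 h2 h; rewrite lt_neqAle negb_and negbK => /orP [/eqP ->//|]; exact: h1.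
have wk : forall w : KG, (forall h, ~~ (h < b)%O -> w@_h = 0) -> forall h, ~~ (h <= b)%O -> w@_h = 0.
  move=> w hw h hb; apply: hw; apply: contra hb; exact: ltW.
case: (classic (Lt b)) => [[v [Vv ltv]]|nL].
  have vb := is_lt_coef ltv.
  set u' := u - (c / v@_b) *: v.
  have [w [w1 w2 w3]] : exists w, [/\ V (u' - w), noL w & forall h, ~~ (h < b)%O -> w@_h = 0].
    apply: nf_lt; apply: sub_lt.
      by move=> h hb; rewrite /u' mcoeffB mcoeffZ hu // (is_lt_out ltv hb) mulr0 subr0.
    by rewrite /u' mcoeffB mcoeffZ -mulrA mulVf // mulr1 subrr.
  exists w; split => //; last exact: wk.
  have -> : u - w = (u' - w) + (c / v@_b) *: v by rewrite /u'; rewrite addrAC subrK.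
  by apply: VD => //; apply: VZ.
set u' := u - c *: << b >>.
have [w [w1 w2 w3]] : exists w, [/\ V (u' - w), noL w & forall h, ~~ (h < b)%O -> w@_h = 0].
  apply: nf_lt; apply: sub_lt.
    move=> h hb; rewrite /u' mcoeffB mcoeffZ hu // mcoeffU1'.
    case: (eqVneq b h) => [e|ne]; first by subst h; rewrite lexx in hb.
    by rewrite mulr0 subr0.
  by rewrite /u' mcoeffB mcoeffZ mcoeffU1' eqxx mulr1 subrr.
exists (w + c *: << b >>); split.
- by have -> : u - (w + c *: << b >>) = u' - w by rewrite /u' opprD addrA addrAC.
- move=> h hL; rewrite mcoeffD mcoeffZ mcoeffU1' w2 // add0r.
  by case: eqP => [e|]; [subst h; case: (nL hL)|rewrite mulr0].
- move=> h hb; rewrite mcoeffD mcoeffZ mcoeffU1' (wk w w3) // add0r.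
  case: (eqVneq b h) => [e|ne]; first by subst h; rewrite lexx in hb.
  by rewrite mulr0.
Qed.

Lemma nf_ex u : exists w, V (u - w) /\ noL w.
Proof.
case: (eqVneq u 0) => [->|unz].
  by exists 0; split; rewrite ?subr0 // => h _; rewrite mcoeff0.
have [b ltb] := msupp_max unz.
have [w [w1 w2 _]] := nf_le (fun h => is_lt_out ltb).
by exists w.
Qed.

Lemma nf_uniq u w1 w2 : V (u - w1) -> noL w1 -> V (u - w2) -> noL w2 -> w1 = w2.
Proof.
move=> h1 n1 h2 n2; apply/eqP; rewrite -subr_eq0; apply/negPn/negP => nz.
have [h lth] := msupp_max nz.
have Vd : V (w1 - w2).
  have -> : w1 - w2 = (u - w2) - (u - w1) by rewrite opprB [RHS]addrC addrA subrK.
  exact: VB.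
have := is_lt_coef lth; rewrite mcoeffB n1 ?n2 ?subrr ?eqxx //; by exists (w1 - w2).
Qed.

Definition NF (u : KG) : KG := epsilon (inhabits 0) (fun w => V (u - w) /\ noL w).

Lemma NF_spec u : V (u - NF u) /\ noL (NF u).
Proof. exact: (epsilon_spec (inhabits 0) _ (nf_ex u)). Qed.

Lemma NF_eq u w : V (u - w) -> noL w -> NF u = w.
Proof. by case: (NF_spec u) => h1 h2 h3 h4; apply: (nf_uniq h1 h2 h3 h4). Qed.

Lemma NF_red : reduction_op NF /\ forall v, kerP NF v <-> V v.
Proof.
split; last first.
  move=> v; split => [hv|hv].
    by have [h _] := NF_spec v; move: h; rewrite /kerP in hv; rewrite hv subr0.
  by apply: NF_eq; rewrite ?subr0 // => h _; rewrite mcoeff0.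
split.
- move=> a u v; apply: NF_eq.
    have -> : a *: u + v - (a *: NF u + NF v) = a *: (u - NF u) + (v - NF v).
      by rewrite scalerBr opprD addrACA.
    by apply: VL; case: (NF_spec u); case: (NF_spec v).
  move=> h hL; rewrite mcoeffD mcoeffZ.
  case: (NF_spec u) => _ hu; case: (NF_spec v) => _ hv.
  by rewrite hu // hv // mulr0 addr0.
- by move=> v; apply: NF_eq; [rewrite subrr | case: (NF_spec v)].
- move=> g; case: (classic (Lt g)) => [hL|nL]; last first.
    right; apply: NF_eq; first by rewrite subrr.
    move=> h hL; rewrite mcoeffU1'; case: eqP => [e|]; last by [].
    by subst h; case: (nL hL).
  have [w [w1 w2 w3]] := nf_le (fun h => is_lt_out (is_ltU g)).
  rewrite (NF_eq w1 w2); left.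
  case: (eqVneq w 0) => [->|wnz]; first by left; split => //; apply/eqP; apply: U_neq0.
  right; have [h lth] := msupp_max wnz.
  exists h, g; split => //; first exact: is_ltU.
  rewrite lt_neqAle; apply/andP; split.
    by apply/eqP => e; subst h; move: (is_lt_coef lth); rewrite w2 ?eqxx.
  by apply: contraNT (is_lt_coef lth) => /w3 ->.
Qed.

End Kerinv.

Lemma kerinvP (K : fieldType) (d : Order.disp_t) (G : orderType d)
  (wfG : well_founded (fun x y : G => (x < y)%O)) (V : {malg K[G]} -> Prop) :
  V 0 -> (forall a u w, V u -> V w -> V (a *: u + w)) ->
  reduction_op (kerinv V) /\ forall v, kerP (kerinv V) v <-> V v.
Proof.
move=> V0 VL; rewrite /kerinv.
apply: (epsilon_spec (inhabits (fun v => v)) (fun T => reduction_op T /\ forall v, kerP T v <-> V v)).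
by exists (NF V); apply: NF_red.
Qed.



Section PhiSec.
Variable (K : fieldType) (d : Order.disp_t) (G : orderType d).
Local Notation KG := {malg K[G]}.

Lemma scaleU (c : K) (g : G) : c *: (<< g >> : KG) = << c *g g >>.
Proof. by apply/malgP => h; rewrite mcoeffZ !mcoeffU mulr_natr. Qed.

Section PhiX.
Variable X : lmodType K.

Definition Phi (F : G -> X) (lam : KG) : X := \sum_(g <- msupp lam) lam@_g *: F g.

Lemma PhiEw F lam (S : {fset G}) : (msupp lam `<=` S)%fset ->
  Phi F lam = \sum_(g <- S) lam@_g *: F g.
Proof.
move=> sub; rewrite /Phi; apply: big_fset_incl => // g _ gn.
by rewrite mcoeff_outdom // scale0r.
Qed.

Lemma PhiL F a l1 l2 : Phi F (a *: l1 + l2) = a *: Phi F l1 + Phi F l2.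
Proof.
have s1 : (msupp l1 `<=` msupp l1 `|` msupp l2)%fset by exact: fsubsetUl.
have s2 : (msupp l2 `<=` msupp l1 `|` msupp l2)%fset by exact: fsubsetUr.
have s3 : (msupp (a *: l1 + l2) `<=` msupp l1 `|` msupp l2)%fset.
  apply: fsubset_trans (msuppD_le _ _) _; apply: fsetSU; exact: msuppZ_le.
rewrite (PhiEw _ s1) (PhiEw _ s2) (PhiEw _ s3) scaler_sumr -big_split /=.
by apply: eq_bigr => g _; rewrite mcoeffD mcoeffZ scalerDl scalerA.
Qed.

Lemma Phi0 F : Phi F 0 = 0.
Proof. by rewrite /Phi msupp0 big_seq_fset0. Qed.

Lemma PhiD F l1 l2 : Phi F (l1 + l2) = Phi F l1 + Phi F l2.
Proof. by rewrite -[l1]scale1r PhiL !scale1r. Qed.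

Lemma PhiZ F a l : Phi F (a *: l) = a *: Phi F l.
Proof. by rewrite -[a *: l]addr0 PhiL Phi0 addr0. Qed.

Lemma PhiN F l : Phi F (- l) = - Phi F l.
Proof. by rewrite -[- l]scaleN1r PhiZ scaleN1r. Qed.

Lemma PhiB F l1 l2 : Phi F (l1 - l2) = Phi F l1 - Phi F l2.
Proof. by rewrite PhiD PhiN. Qed.

Lemma PhiU F c g : Phi F (<< c *g g >>) = c *: F g.
Proof.
rewrite (PhiEw _ (msuppU_le)) big_seq_fset1 mcoeffUU //.
Qed.

Lemma Phi_sum F (I : Type) (r : seq I) (P : pred I) (l : I -> KG) :
  Phi F (\sum_(i <- r | P i) l i) = \sum_(i <- r | P i) Phi F (l i).
Proof. exact: (big_morph _ (PhiD F) (Phi0 F)). Qed.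

Lemma Phi_ext F1 F2 lam : (forall g, g \in msupp lam -> F1 g = F2 g) -> Phi F1 lam = Phi F2 lam.
Proof. by move=> e; rewrite /Phi; apply: eq_big_seq => g /e ->. Qed.

Lemma PhiF_D F1 F2 lam : Phi (fun g => F1 g + F2 g) lam = Phi F1 lam + Phi F2 lam.
Proof. by rewrite /Phi -big_split; apply: eq_bigr => g _; rewrite scalerDr. Qed.

Lemma PhiF_0 lam : Phi (fun _ => 0) lam = 0.
Proof. by rewrite /Phi big1 // => g _; rewrite scaler0. Qed.

End PhiX.

Lemma Phi_comp (X Y : lmodType K) (f : X -> Y)
  (lf : forall a x y, f (a *: x + y) = a *: f x + f y) F lam :
  f (Phi F lam) = Phi (fun g => f (F g)) lam.
Proof.
have f0 : f 0 = 0.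
  by have := lf (-1) 0 0; rewrite scaler0 addr0 scaleN1r addNr.
have fD : forall x y, f (x + y) = f x + f y by move=> x y; rewrite -[x]scale1r lf !scale1r.
have fZ : forall a x, f (a *: x) = a *: f x by move=> a x; rewrite -[a *: x]addr0 lf f0 addr0.
rewrite /Phi (big_morph _ fD f0); apply: eq_bigr => g _; exact: fZ.
Qed.

Lemma Phi_coef (F : G -> KG) lam h :
  (Phi F lam)@_h = \sum_(g <- msupp lam) lam@_g * (F g)@_h.
Proof.
rewrite /Phi (big_morph (mcoeff h) (mcoeffD h) (mcoeff0 h)).
by apply: eq_bigr => g _; rewrite mcoeffZ.
Qed.

Lemma PhiU_id (lam : KG) : Phi (fun g => << g >>) lam = lam.
Proof.
rewrite {2}(monalgE lam) /Phi; apply: eq_bigr => g _; exact: scaleU.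
Qed.

Lemma dsumE (T : KG -> KG) lam : dsum T lam = Phi (fun g => << g >> - T << g >>) lam.
Proof. by []. Qed.

Section RedOp.
Variable T : KG -> KG.
Hypothesis hT : reduction_op T.

Lemma Tlin a u v : T (a *: u + v) = a *: T u + T v.
Proof. by case: hT => l _ _; apply: l. Qed.

Lemma TT v : T (T v) = T v.
Proof. by case: hT. Qed.

Lemma T0 : T 0 = 0.
Proof.
by have := Tlin (-1) 0 0; rewrite scaler0 addr0 scaleN1r addNr.
Qed.

Lemma TD u v : T (u + v) = T u + T v.
Proof. by rewrite -[u]scale1r Tlin !scale1r. Qed.
Lemma TZ a u : T (a *: u) = a *: T u.
Proof. by rewrite -[a *: u]addr0 Tlin T0 addr0. Qed.
Lemma TN u : T (- u) = - T u.
Proof. by rewrite -[- u]scaleN1r TZ scaleN1r. Qed.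
Lemma TB u v : T (u - v) = T u - T v.
Proof. by rewrite TD TN. Qed.

Lemma redP g : red T g <-> T << g >> != << g >>.
Proof. by rewrite /red; split => [/eqP|/eqP]. Qed.

Lemma red_lt g : red T g -> forall h, ~~ (h < g)%O -> (T << g >>)@_h = 0.
Proof.
move=> rg h nh; case: hT => _ _ /(_ g) [[[-> _]|[gu [gv [lu lv lt]]]]|e].
- by rewrite mcoeff0.
- 
  have egv : gv = g by case: lv; rewrite msuppU oner_eq0 inE => /eqP.
  subst gv; apply: mcoeff_outdom; apply/negP => hin.
  case: lu => _ /(_ h hin) hgu.
  by move: nh; rewrite (le_lt_trans hgu lt).
- by case: rg.
Qed.

Lemma Tker g : T (<< g >> - T << g >>) = 0.
Proof. by rewrite TB TT subrr. Qed.

Lemma dsum_ker lam : kerP T (dsum T lam).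
Proof.
rewrite /kerP dsumE (Phi_comp Tlin).
under Phi_ext => g _ do rewrite Tker.
exact: PhiF_0.
Qed.

Lemma dsumL a l1 l2 : dsum T (a *: l1 + l2) = a *: dsum T l1 + dsum T l2.
Proof. exact: PhiL. Qed.

Lemma tdec_ex w : kerP T w -> exists lam, tdec T w lam.
Proof.
move=> kw.
pose lam : KG := [malg g in msupp w => if T << g >> != << g >> then w@_g else 0].
have lamE : forall g, lam@_g = if T << g >> != << g >> then w@_g else 0.
  move=> g; rewrite /lam mcoeffE; case: msuppP => //; by case: ifP.
exists lam; split.
  move=> g; rewrite -mcoeff_neq0 lamE; case: ifP => [/eqP ne _|_]; last by rewrite eqxx.
  by move=> e; apply: ne.
have sub : (msupp lam `<=` msupp w)%fset.
  apply/fsubsetP => g; rewrite -!mcoeff_neq0 lamE; case: ifP => //; by rewrite eqxx.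
rewrite dsumE (PhiEw _ sub).
transitivity (Phi (fun g => << g >> - T << g >>) w); last first.
  rewrite /Phi; apply: eq_bigr => g _; rewrite lamE; case: ifP => // /negbFE/eqP ->.
  by rewrite subrr !scaler0.
rewrite PhiF_D.
have lf : forall a x y, - T (a *: x + y) = a *: (- T x) + - T y.
  by move=> a x y; rewrite Tlin opprD scalerN.
rewrite -(Phi_comp lf (fun g => << g >>) w) PhiU_id.
by rewrite /kerP in kw; rewrite kw oppr0 addr0.
Qed.

Lemma dsum_coef lam h : (forall g, g \in msupp lam -> red T g) ->
  (forall g, g \in msupp lam -> (g <= h)%O) -> (dsum T lam)@_h = lam@_h.
Proof.
move=> rl bl; rewrite dsumE Phi_coef.
have -> : lam@_h = (Phi (fun g => << g >>) lam)@_h by rewrite PhiU_id.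
rewrite Phi_coef.
apply: eq_big_seq => g gin; rewrite mcoeffB (red_lt (rl g gin)) ?subr0 //.
by rewrite -leNgt; apply: bl.
Qed.

Lemma dsum_inj lam : (forall g, g \in msupp lam -> red T g) -> dsum T lam = 0 -> lam = 0.
Proof.
move=> rl e; apply/eqP/negPn/negP => nz.
have [h [hin hmax]] := msupp_max nz.
have := dsum_coef rl hmax; rewrite e mcoeff0 => /esym/eqP.
by rewrite mcoeff_eq0 hin.
Qed.

End RedOp.
End PhiSec.



Section Candec.
Variable (K : fieldType) (d : Order.disp_t) (G : orderType d).
Hypothesis wfG : well_founded (fun x y : G => (x < y)%O).
Local Notation KG := {malg K[G]}.
Variable T : nat -> KG -> KG.
Variable m : nat.
Hypothesis hT : forall j, (j < m)%N -> reduction_op (T j).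

Definition phi (lam : 'I_m -> KG) : KG := \sum_(j < m) dsum (T j) (lam j).
Definition rs (lam : 'I_m -> KG) := forall (j : 'I_m) g, ~ red (T j) g -> (lam j)@_g = 0.
Definition nl (lam : 'I_m -> KG) := forall (j : 'I_m) g, lt_syz T m j g -> (lam j)@_g = 0.
Definition ble (lam : 'I_m -> KG) (j : nat) (g : G) := forall (j' : 'I_m) g',
  ~~ ((j' < j)%N || ((j' == j :> nat) && (g' <= g)%O)) -> (lam j')@_g' = 0.
Definition blt (lam : 'I_m -> KG) (j : nat) (g : G) := forall (j' : 'I_m) g',
  ~~ ((j' < j)%N || ((j' == j :> nat) && (g' < g)%O)) -> (lam j')@_g' = 0.

Lemma blt_ble lam j g : blt lam j g -> ble lam j g.
Proof.
move=> h j' g' c; apply: h; apply: contra c => /orP [->//|/andP [-> /ltW ->]].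
by rewrite orbT.
Qed.

Lemma phiL k (a b : 'I_m -> KG) : phi (fun i => k *: a i + b i) = k *: phi a + phi b.
Proof.
rewrite /phi scaler_sumr -big_split /=; apply: eq_bigr => i _.
by rewrite dsumL.
Qed.

Lemma phi0 : phi (fun _ => 0) = 0.
Proof.
rewrite /phi big1 // => i _; by rewrite /dsum msupp0 big_seq_fset0.
Qed.

Lemma phiD (a b : 'I_m -> KG) : phi (fun i => a i + b i) = phi a + phi b.
Proof.
have := phiL 1 a b; rewrite scale1r => <-.
by rewrite /phi; apply: eq_bigr => i _; rewrite scale1r.
Qed.

Lemma phiZ k (a : 'I_m -> KG) : phi (fun i => k *: a i) = k *: phi a.
Proof.
have := phiL k a (fun _ => 0); rewrite phi0 addr0 => <-.
by rewrite /phi; apply: eq_bigr => i _; rewrite addr0.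
Qed.

Lemma phiB (a b : 'I_m -> KG) : phi (fun i => a i - b i) = phi a - phi b.
Proof.
rewrite -scaleN1r -phiZ -phiD; rewrite /phi; apply: eq_bigr => i _; by rewrite scaleN1r.
Qed.

Lemma phi1 (jo : 'I_m) u : phi (fun i => if i == jo then u else 0) = dsum (T jo) u.
Proof.
rewrite /phi (bigD1 jo) //= eqxx big1 ?addr0 // => i /negbTE ->.
by rewrite /dsum msupp0 big_seq_fset0.
Qed.

Definition NFP (j : nat) (g : G) := forall lam, rs lam -> ble lam j g ->
  exists lam', [/\ rs lam', nl lam', phi lam' = phi lam & ble lam' j g].

Lemma nf_all j g : NFP j g.
Proof.
elim/ltn_ind: j g => j IHj g.
elim/(well_founded_induction wfG): g => g IHg.
have IH : forall j' g', ((j' < j)%N || ((j' == j) && (g' < g)%O)) -> NFP j' g'.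
  move=> j' g' /orP [/IHj //|/andP [/eqP -> /IHg //]].
have nflt : forall lam, rs lam -> blt lam j g ->
    exists lam', [/\ rs lam', nl lam', phi lam' = phi lam & blt lam' j g].
  move=> lam rl bl.
  case: (classic (exists j0 : 'I_m, lam j0 != 0)) => [ex|nex]; last first.
    have z : forall i, lam i = 0.
      by move=> i; apply/eqP/negPn/negP => nz; apply: nex; exists i.
    exists lam; split => //; by move=> i g' _; rewrite z mcoeff0.
  pose P k := [exists j' : 'I_m, (j' == k :> nat) && (lam j' != 0)].
  have Pex : exists k, P k.
    by case: ex => j0 nz; exists j0; apply/existsP; exists j0; rewrite eqxx nz.
  have Pb : forall k, P k -> (k <= m)%N.
    by move=> k /existsP [j' /andP [/eqP <- _]]; apply: ltnW.
  case: (ex_maxnP Pex Pb) => jm /existsP [jo /andP [/eqP ejo nzo]] jmax.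
  have [gm ltm] := msupp_max nzo.
  have blem : ble lam jo gm.
    move=> j' g'; rewrite negb_or negb_and -leqNgt => /andP [le1 /orP [ne|nle]].
      have : ~~ P j'.
        apply: contraNN ne => Pj; rewrite eqn_leq le1 andbT ejo; exact: jmax.
      rewrite /P => /existsPn /(_ j'); rewrite eqxx /= negbK => /eqP ->.
      by rewrite mcoeff0.
    move: le1; rewrite leq_eqVlt => /orP [/eqP e|lt].
      have e' : jo = j' by apply: val_inj.
      by subst j'; apply: (is_lt_out ltm).
    have : ~~ P j'.
      apply/negP => Pj; have := jmax _ Pj; rewrite -ejo leqNgt; by rewrite lt.
    rewrite /P => /existsPn /(_ j'); rewrite eqxx /= negbK => /eqP ->.
    by rewrite mcoeff0.
  have lto : (jo < j)%N || ((jo == j :> nat) && (gm < g)%O).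
    apply: contraNT (is_lt_coef ltm) => c; apply/eqP; exact: bl.
  have [lam' [r1 r2 r3 r4]] := IH _ _ lto lam rl blem.
  exists lam'; split => // j' g' c; apply: r4; apply: contra c.
  case/orP => [lt|/andP [/eqP e le]].
    case/orP: lto => [lt2|/andP [/eqP e2 _]]; first by rewrite (ltn_trans lt lt2).
    by rewrite -e2 lt.
  case/orP: lto => [lt2|/andP [/eqP e2 lt2]]; first by rewrite e lt2.
  by rewrite e e2 eqxx (le_lt_trans le lt2) orbT.
move=> lam rl bl.
have Hc : (exists2 jo : 'I_m, jo = j :> nat & (lam jo)@_g != 0) \/ blt lam j g.
  case: (classic (exists2 jo : 'I_m, jo = j :> nat & (lam jo)@_g != 0)) => [h|h]; [by left|right].
  move=> j' g' c; case: (boolP ((j' == j :> nat) && (g' == g))) => [/andP [/eqP e1 /eqP e2]|ne].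
    subst g'; apply/eqP/negPn/negP => nz; by apply: h; exists j'.
  apply: bl; apply: contra c; case/orP => [->//|/andP [/eqP ej le]].
  move: ne; rewrite ej (eqxx j) /= => ne; by rewrite lt_neqAle ne le orbT.
case: Hc => [[jo ejo nzc]|blt0]; last first.
  have [lam' [r1 r2 r3 r4]] := nflt lam rl blt0.
  by exists lam'; split => //; apply: blt_ble.
set c := (lam jo)@_g.
have bl' : forall (j' : 'I_m) g', ~~ ((j' < j)%N || ((j' == j :> nat) && (g' <= g)%O)) -> (lam j')@_g' = 0 := bl.
case: (classic (lt_syz T m jo g)) => [[x [lam0 [sx xnz ex gin bnd]]]|nlt].
  have l0nz : (lam0 jo)@_g != 0 by rewrite mcoeff_neq0.
  pose k := c / (lam0 jo)@_g.
  pose lam1 := fun i => lam i - k *: lam0 i.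
  have rs1 : rs lam1.
    move=> i g' nr; rewrite /lam1 mcoeffB mcoeffZ rl //.
    have -> : (lam0 i)@_g' = 0.
      apply: mcoeff_outdom; apply/negP => hin; apply: nr; exact: (ex i).1.
    by rewrite mulr0 subr0.
  have phi1e : phi lam1 = phi lam.
    rewrite /lam1 phiB phiZ.
    have -> : phi lam0 = 0.
      case: sx => _ <-; rewrite /phi; apply: eq_bigr => i _; by rewrite (ex i).2.
    by rewrite scaler0 subr0.
  have blt1 : blt lam1 j g.
    move=> j' g' cn; rewrite /lam1 mcoeffB mcoeffZ.
    case: (boolP ((j' == jo) && (g' == g))) => [/andP [/eqP ej /eqP eg]|ne].
      by subst j' g'; rewrite /k -mulrA mulVf // mulr1 subrr.
    have nle : ~~ ((j' < j)%N || ((j' == j :> nat) && (g' <= g)%O)).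
      apply: contra cn; case/orP => [->//|/andP [/eqP ej le]].
      have ej' : j' = jo by apply: val_inj; rewrite /= ej ejo.
      move: ne; rewrite ej' (eqxx jo) /= => ne.
      by rewrite ejo (eqxx j) lt_neqAle ne le orbT.
    rewrite bl //.
    have -> : (lam0 j')@_g' = 0.
      apply: mcoeff_outdom; apply/negP => hin; case: (bnd j' g' hin) => [lt|[e le]].
        by move: nle; rewrite -ejo lt.
      by move: nle; rewrite e ejo (eqxx j) le orbT.
    by rewrite mulr0 subr0.
  have [lam' [r1 r2 r3 r4]] := nflt lam1 rs1 blt1.
  by exists lam'; split => //; [rewrite r3 | apply: blt_ble].
pose e1 := fun i : 'I_m => if i == jo then c *: (<< g >> : KG) else 0.
pose lam1 := fun i => lam i - e1 i.
have rs1 : rs lam1.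
  move=> i g' nr; rewrite /lam1 /e1 mcoeffB rl //; case: eqP => [ei|_]; last by rewrite mcoeff0 subr0.
  subst i; rewrite mcoeffZ mcoeffU1'; case: eqP => [eg|]; last by rewrite mulr0 subr0.
  subst g'; exfalso; apply: nr; apply: NNPP => nr; by move: nzc; rewrite /c rl // eqxx.
have blt1 : blt lam1 j g.
  move=> j' g' cn; rewrite /lam1 /e1 mcoeffB.
  case: (boolP ((j' == jo) && (g' == g))) => [/andP [/eqP ej /eqP eg]|ne].
    by subst j' g'; rewrite (eqxx jo) mcoeffZ mcoeffU1' (eqxx g) mulr1 subrr.
  have -> : (lam j')@_g' = 0.
    apply: bl; apply: contra cn; case/orP => [->//|/andP [/eqP ej le]].
    have ej' : j' = jo by apply: val_inj; rewrite /= ej ejo.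
    move: ne; rewrite ej' (eqxx jo) /= => ne.
    by rewrite ejo (eqxx j) lt_neqAle ne le orbT.
  case: eqP => [ej|_]; last by rewrite mcoeff0 subr0.
  subst j'; rewrite mcoeffZ mcoeffU1'; case: eqP => [eg|]; last by rewrite mulr0 subr0.
  by subst g'; move: ne; rewrite !eqxx.
have [lam2 [r1 r2 r3 r4]] := nflt lam1 rs1 blt1.
exists (fun i => lam2 i + e1 i); split.
- move=> i g' nr; rewrite mcoeffD r1 // add0r /e1; case: eqP => [ei|_]; last by rewrite mcoeff0.
  subst i; rewrite mcoeffZ mcoeffU1'; case: eqP => [eg|]; last by rewrite mulr0.
  subst g'; exfalso; apply: nr; apply: NNPP => nr; by move: nzc; rewrite /c rl // eqxx.
- move=> i g' lts; rewrite mcoeffD r2 // add0r /e1; case: eqP => [ei|_]; last by rewrite mcoeff0.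
  subst i; rewrite mcoeffZ mcoeffU1'; case: eqP => [eg|]; last by rewrite mulr0.
  by subst g'; case: (nlt lts).
- by rewrite phiD r3 /lam1 phiB subrK.
- move=> j' g' cn; rewrite mcoeffD (blt_ble r4) // add0r /e1.
  case: eqP => [ei|_]; last by rewrite mcoeff0.
  subst j'; rewrite mcoeffZ mcoeffU1'; case: eqP => [eg|]; last by rewrite mulr0.
  by subst g'; move: cn; rewrite ejo eqxx lexx orbT.
Qed.

Lemma candec_ex v : sum_ker T m v -> exists mu, candec T m v mu.
Proof.
case=> w [kw ev].
pose lam := fun j : 'I_m => epsilon (inhabits 0) (tdec (T j) (w j)).
have tl : forall j : 'I_m, tdec (T j) (w j) (lam j).
  move=> j; apply: epsilon_spec; exact: (tdec_ex (hT (ltn_ord j)) (kw j)).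
have rl : rs lam.
  move=> j g nr; apply: mcoeff_outdom; apply/negP => hin; apply: nr; exact: (tl j).1.
have pl : phi lam = v.
  by rewrite ev /phi; apply: eq_bigr => j _; rewrite -(tl j).2.
have conv : forall mu, rs mu -> nl mu -> phi mu = v -> candec T m v mu.
  move=> mu r1 r2 r3; split => //.
  - move=> j g; rewrite -mcoeff_neq0 => nz; apply: NNPP => nr; by move: nz; rewrite r1 ?eqxx.
  - move=> j g; rewrite -mcoeff_neq0 => nz lts; by move: nz; rewrite r2 ?eqxx.
case: (classic (exists j0 : 'I_m, lam j0 != 0)) => [[j0 nz]|nex]; last first.
  exists lam; apply: conv => //.
  move=> i g _; have -> : lam i = 0 by apply/eqP/negPn/negP => nz; apply: nex; exists i.
  by rewrite mcoeff0.
have [g0 _] := msupp_max nz.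
have bl : ble lam m g0 by move=> j' g' c; move: c; rewrite ltn_ord.
have [mu [r1 r2 r3 _]] := nf_all rl bl.
by exists mu; apply: conv; rewrite ?r3.
Qed.

End Candec.



Lemma insub_lo (m : nat) (X : Type) (f : 'I_m -> X) (y : X) (i : 'I_m) :
  (if (insub (val (widen_ord (leqnSn m) i)) : option 'I_m) is Some j' then f j' else y) = f i.
Proof.
case: insubP => [j' _ e|]; last by rewrite /= ltn_ord.
by congr f; apply: val_inj; rewrite e.
Qed.

Lemma insub_hi (m : nat) (X : Type) (f : 'I_m -> X) (y : X) :
  (if (insub (val (@ord_max m)) : option 'I_m) is Some j' then f j' else y) = y.
Proof.
case: insubP => [j' _ e|//]; exfalso.
by have := ltn_ord j'; rewrite e /= ltnn.
Qed.

Lemma ord_cases (m : nat) (j : 'I_m.+1) :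
  (exists i : 'I_m, j = widen_ord (leqnSn m) i) \/ j = ord_max.
Proof.
case: (ltnP j m) => h; first by left; exists (Ordinal h); apply: val_inj.
right; apply: val_inj => /=; apply/eqP; rewrite eqn_leq h andbT -ltnS; exact: ltn_ord.
Qed.

Section Main.
Variable (K : fieldType) (d : Order.disp_t) (G : orderType d).
Hypothesis wfG : well_founded (fun x y : G => (x < y)%O).
Local Notation KG := {malg K[G]}.
Variable T : nat -> KG -> KG.
Variable m : nat.
Hypothesis hT : forall j, (j <= m)%N -> reduction_op (T j).

Lemma hTlt j : (j < m)%N -> reduction_op (T j).
Proof. by move=> h; apply: hT; apply: ltnW. Qed.


Lemma syz0 k : (k <= m.+1)%N -> syz T k 0.
Proof.
move=> hk; split.
  move=> j; rewrite /kerP ffunE; apply: T0; apply: hT; rewrite -ltnS.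
  exact: leq_trans (ltn_ord j) hk.
by rewrite big1 // => j _; rewrite ffunE.
Qed.

Lemma syzL k : (k <= m.+1)%N -> forall a (x y : {ffun 'I_k -> KG}),
  syz T k x -> syz T k y -> syz T k (a *: x + y).
Proof.
move=> hk a x y [kx sx] [ky sy]; split.
  move=> j; rewrite /kerP !ffunE.
  have hj : reduction_op (T j).
    by apply: hT; rewrite -ltnS; exact: leq_trans (ltn_ord j) hk.
  by rewrite (Tlin hj) (kx j) (ky j) scaler0 addr0.
under eq_bigr => j _ do rewrite !ffunE.
by rewrite big_split /= -scaler_sumr sx sy scaler0 addr0.
Qed.

Lemma syzD k (hk : (k <= m.+1)%N) x y : syz T k x -> syz T k y -> syz T k (x + y).
Proof. by move=> a b; rewrite -[x]scale1r; apply: syzL. Qed.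
Lemma syzZ k (hk : (k <= m.+1)%N) a x : syz T k x -> syz T k (a *: x).
Proof. by move=> b; rewrite -[_ *: _]addr0; apply: syzL => //; apply: syz0. Qed.

Local Notation U := (Umeet T m).
Local Notation J := (join_op (Umeet T m) (T m)).

Lemma sum_ker0 : sum_ker T m 0.
Proof. by exists (fun _ => 0); split => [j|]; [apply: T0; apply: hTlt | rewrite big1]. Qed.

Lemma sum_kerL a u w : sum_ker T m u -> sum_ker T m w -> sum_ker T m (a *: u + w).
Proof.
move=> [wu [ku eu]] [ww [kw ew]]; exists (fun j => a *: wu j + ww j); split.
  by move=> j; rewrite /kerP (Tlin (hTlt (ltn_ord j))) (ku j) (kw j) scaler0 addr0.
by rewrite big_split /= -scaler_sumr eu ew.
Qed.

Lemma UP : reduction_op U /\ forall v, kerP U v <-> sum_ker T m v.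
Proof. exact: kerinvP wfG _ sum_ker0 sum_kerL. Qed.

Lemma kerL (S : KG -> KG) : reduction_op S -> forall a u w, kerP S u -> kerP S w -> kerP S (a *: u + w).
Proof. by move=> hS a u w ku kw; rewrite /kerP (Tlin hS) ku kw scaler0 addr0. Qed.

Lemma JP : reduction_op J /\ forall v, kerP J v <-> (kerP U v /\ kerP (T m) v).
Proof.
case: UP => hU _.
apply: (kerinvP wfG).
  by split; [apply: T0 | apply: T0; apply: hT].
by move=> a u w [u1 u2] [w1 w2]; split; apply: kerL => //; apply: hT.
Qed.

Lemma s_ex g0 : exists s, s_rel T m g0 s.
Proof.
case: JP => hJ kJ; case: UP => hU kU.
set v := << g0 >> - J << g0 >>.
have kv : kerP J v by rewrite /kerP /v (Tker hJ).
have [/kU sv kmv] := (kJ v).1 kv.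
have [lam tl] := tdec_ex (hT (leqnn m)) kmv.
have [mu cm] := candec_ex wfG hTlt sv.
by exists [ffun j : 'I_m.+1 =>
     (if (insub (val j) : option 'I_m) is Some j' then - dsum (T j') (mu j')
      else dsum (T m) lam) : KG], lam, mu.
Qed.

Lemma s_spec g0 : s_rel T m g0 (s_elt T m g0).
Proof. rewrite /s_elt; apply: epsilon_spec; exact: s_ex. Qed.

Lemma s_max g0 : (s_elt T m g0) ord_max = << g0 >> - J << g0 >>.
Proof.
case: (s_spec g0) => lam [mu [tl cm ->]]; rewrite ffunE insub_hi.
by case: tl => _ <-.
Qed.

Lemma s_syz g0 : syz T m.+1 (s_elt T m g0).
Proof.
case: (s_spec g0) => lam [mu [tl [c1 c2 c3] ->]]; split.
  move=> j; rewrite /kerP ffunE.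
  case: insubP => [j' _ ej|nj].
    rewrite -ej (TN (hTlt (ltn_ord j'))); apply/eqP; rewrite oppr_eq0; apply/eqP.
    exact: dsum_ker (hTlt (ltn_ord j')) _.
  have -> : (j : nat) = m.
    by apply/eqP; rewrite eqn_leq -ltnS ltn_ord /= leqNgt.
  exact: dsum_ker (hT (leqnn m)) _.
rewrite big_ord_recr /= ffunE insub_hi.
under eq_bigr => i _ do rewrite ffunE insub_lo.
by rewrite sumrN -c3; case: tl => _ <-; rewrite addNr.
Qed.

Lemma span_syz z : in_span_s T m z -> syz T m.+1 z.
Proof.
case=> r [c [_ ->]].
apply: (big_ind (syz T m.+1)) => //; first exact: syz0.
  by move=> x y; apply: syzD.
by move=> g0 _; apply: syzZ => //; apply: s_syz.
Qed.

Lemma iota_syz_syz y : syz T m y -> syz T m.+1 (iota_syz m y).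
Proof.
case=> ky sy; split.
  move=> j; rewrite /kerP ffunE.
  case: insubP => [j' _ ej|nj]; first by rewrite -ej; apply: ky.
  by apply: T0; apply: hT; rewrite -ltnS.
rewrite big_ord_recr /= ffunE insub_hi addr0.
by under eq_bigr => i _ do rewrite ffunE insub_lo.
Qed.

Lemma part1 x : syz T m.+1 x <->
     exists (y : {ffun 'I_m -> KG}) (z : {ffun 'I_m.+1 -> KG}),
       [/\ syz T m y, in_span_s T m z & x = iota_syz m y + z].
Proof.
split; last first.
  case=> y [z [sy sz ->]]; apply: syzD => //.
    exact: iota_syz_syz.
  exact: span_syz.
move=> sx; case: (sx) => kx sumx.
case: JP => hJ kJ; case: UP => hU kU.
set xm := x ord_max.
have sumx' : \sum_(i < m) x (widen_ord (leqnSn m) i) + xm = 0.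
  by move: sumx; rewrite big_ord_recr.
have kxm : kerP J xm.
  apply/kJ; split; last exact: (kx ord_max).
  apply/kU; exists (fun i => - x (widen_ord (leqnSn m) i)); split.
    by move=> i; rewrite /kerP (TN (hTlt (ltn_ord i))) (kx (widen_ord (leqnSn m) i)) oppr0.
  by rewrite sumrN; apply/eqP; rewrite -addr_eq0 addrC sumx'.
have [lam [rl exm]] := tdec_ex hJ kxm.
pose z : {ffun 'I_m.+1 -> KG} := \sum_(g0 <- msupp lam) lam@_g0 *: s_elt T m g0.
have zspan : in_span_s T m z.
  by exists (msupp lam), (fun g => lam@_g); split => // g0 /rl.
have zs := span_syz zspan.
have zm : z ord_max = xm.
  rewrite /z sum_ffunE exm /dsum; apply: eq_bigr => g0 _; by rewrite ffunE s_max.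
exists [ffun i : 'I_m => x (widen_ord (leqnSn m) i) - z (widen_ord (leqnSn m) i)], z.
split => //.
- split.
    move=> i; rewrite /kerP ffunE (TB (hTlt (ltn_ord i))).
    by rewrite (kx (widen_ord (leqnSn m) i)) (zs.1 (widen_ord (leqnSn m) i)) subrr.
  under eq_bigr => i _ do rewrite ffunE.
  rewrite sumrB.
  have : \sum_(i < m) z (widen_ord (leqnSn m) i) + z ord_max = 0.
    by move: zs.2; rewrite big_ord_recr.
  rewrite zm => e2.
  apply/eqP; rewrite subr_eq0; apply/eqP.
  by apply: (addIr xm); rewrite sumx' e2.
- apply/ffunP => j; rewrite !ffunE.
  case: (ord_cases j) => [[i ->]|->].
    by rewrite insub_lo ffunE subrK.
  by rewrite insub_hi add0r zm.
Qed.

Lemma part2 y : syz T m y -> in_span_s T m (iota_syz m y) -> iota_syz m y = 0.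
Proof.
move=> sy [r [c [hr e]]].
case: JP => hJ kJ.
pose lam : KG := \sum_(g0 <- r) c g0 *: << g0 >>.
have eP : iota_syz m y = Phi (s_elt T m) lam.
  rewrite e /lam Phi_sum; apply: eq_bigr => g0 _; by rewrite scaleU PhiU.
have lamc : forall g, lam@_g != 0 -> g \in r.
  move=> g; apply: contraR => gn; rewrite /lam.
  rewrite (big_morph (mcoeff g) (mcoeffD g) (mcoeff0 g)) big1_seq //.
  move=> g0 /andP [_ g0r]; rewrite mcoeffZ mcoeffU1'.
  by case: eqP => [e1|]; [subst g0; rewrite g0r in gn | rewrite mulr0].
have lam0 : lam = 0.
  apply: (dsum_inj hJ).
    by move=> g; rewrite -mcoeff_neq0 => /lamc /hr.
  have := congr1 (fun f : {ffun 'I_m.+1 -> KG} => f ord_max) eP.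
  rewrite /= ffunE insub_hi.
  rewrite (Phi_comp (f := fun f : {ffun 'I_m.+1 -> KG} => f ord_max)); last first.
    by move=> a f1 f2; rewrite !ffunE.
  by rewrite dsumE; under Phi_ext => g _ do rewrite s_max.
by rewrite eP lam0 Phi0.
Qed.

End Main.

Theorem mainTheorem5 (K : fieldType) (d : Order.disp_t) (G : orderType d)
  (wfG : well_founded (fun x y : G => (x < y)%O))
  (n : nat) (T : nat -> {malg K[G]} -> {malg K[G]})
  (hT : forall j, (j < n)%N -> reduction_op (T j))
  (m : nat) (hm1 : (1 <= m)%N) (hmn : (m < n)%N) :
  (forall x : {ffun 'I_m.+1 -> {malg K[G]}},
     syz T m.+1 x <->
     exists (y : {ffun 'I_m -> {malg K[G]}}) (z : {ffun 'I_m.+1 -> {malg K[G]}}),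
       [/\ syz T m y, in_span_s T m z & x = iota_syz m y + z]) /\
  (forall y : {ffun 'I_m -> {malg K[G]}},
     syz T m y -> in_span_s T m (iota_syz m y) -> iota_syz m y = 0).
Proof.
have hT' : forall j, (j <= m)%N -> reduction_op (T j).
  by move=> j hj; apply: hT; exact: leq_ltn_trans hj hmn.
split.
  by move=> x; apply: (part1 wfG hT').
by move=> y; apply: (part2 wfG hT').
Qed.
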